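(* Let $\langle D,E,e,\varepsilon\rangle$ be a restricted Priestley duality between a variety $\mathcal A$ and a category $\mathcal X$. Let $\mathbf A$ be a finite algebra in $\mathcal A$ and let $\mathbb X=D(\mathbf A)$. Then the following are equivalent: (1) $\mathbf A$ is semi-primal; (2) for each $\mathbb Y\in\mathcal X$ and every pair $\phi_1\colon\mathbb X\to\mathbb Y$, $\phi_2\colon\mathbb X\to\mathbb Y$ of jointly $\mathcal P$-surjective morphisms, either $\mathbb Y^\flat=\phi_1^\flat(\mathbb X^\flat)\,\dot\cup\,\phi_2^\flat(\mathbb X^\flat)$ or $\phi_1=\phi_2$.
   Context: $\mathcal D$ denotes the category of bounded distributive lattices and $\mathcal P$ the category of Priestley spaces (continuous order-preserving maps). $\mathbf 2$ is the two-element bounded lattice, $\mathbbm 2$ the discrete two-element chain. Priestley duality: $H(\mathbf L)=\mathcal D(\mathbf L,\mathbf 2)$ with order and topology from $\mathbbm 2^L$, $K(\mathbb X)=\mathcal P(\mathbb X,\mathbbm 2)$ with pointwise operations; morphisms act by precomposition; unit $e$ and counit $\varepsilon$ are evaluations. A restricted Priestley duality: $\mathcal A$ is a variety with a term reduct in $\mathcal D$ and forgetful functor ${}^\flat\colon\mathcal A\to\mathcal D$; $\mathcal X$ is a category with a functor ${}^\flat\colon\mathcal X\to\mathcal P$; $D\colon\mathcal A\to\mathcal X$, $E\colon\mathcal X\to\mathcal A$ form a dual equivalence with unit $e\colon\mathrm{id}\to ED$ and counit $\varepsilon\colon\mathrm{id}\to DE$ such that ${}^\flat\circ D=H\circ{}^\flat$,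 ${}^\flat\circ E=K\circ{}^\flat$, $e_{\mathbf A}^\flat=e_{\mathbf A^\flat}$ and $\varepsilon_{\mathbb X}^\flat=\varepsilon_{\mathbb X^\flat}$. Morphisms $\phi_1,\phi_2$ into $\mathbb Y$ are jointly $\mathcal P$-surjective if the union of the images of $\phi_1^\flat,\phi_2^\flat$ is all of $\mathbb Y^\flat$. $\mathbb Y^\flat=\phi_1^\flat(\mathbb X^\flat)\,\dot\cup\,\phi_2^\flat(\mathbb X^\flat)$ means the two images are disjoint, cover $\mathbb Y^\flat$, and no element of one is comparable to an element of the other. A finite algebra $\mathbf A$ is semi-primal if it has a majority term and every subalgebra of $\mathbf A^2$ is either a product of two subalgebras of $\mathbf A$ or is the graph $\{(b,b)\mid b\in B\}$ of the identity map on a subalgebra $\mathbf B$ of $\mathbf A$. *)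

(* Defs.v *)
From mathcomp Require Import all_boot.
From Stdlib Require Import List.

Set Implicit Arguments.
Unset Strict Implicit.
Unset Printing Implicit Defensive.

Record Sig := { Op : Type; ar : Op -> nat }.

Inductive term (S : Sig) (n : nat) : Type :=
  | tvar : 'I_n -> term S n
  | tapp : forall o : Op S, ('I_(ar o) -> term S n) -> term S n.

Record alg (S : Sig) := { acar :> Type; aop : forall o : Op S, ('I_(ar o) -> acar) -> acar }.

Fixpoint teval (S : Sig) (A : alg S) (n : nat) (v : 'I_n -> A) (t : term S n) : A :=
  match t with
  | tvar i => v i
  | tapp o args => @aop S A o (fun j => teval v (args j))
  end.

Definition models (S : Sig) (Sigma : forall n, term S n -> term S n -> Prop) (A : alg S) :=
  forall n (l r : term S n), Sigma n l r -> forall v : 'I_n -> A, teval v l = teval v r.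

Definition top0 (S : Sig) (A : alg S) (t : term S 0) : A :=
  teval (fun i : 'I_0 => False_rect A (notF (ltn_ord i))) t.
Definition top2 (S : Sig) (A : alg S) (t : term S 2) (x y : A) : A :=
  teval (fun i : 'I_2 => if val i == 0 then x else y) t.
Definition top3 (S : Sig) (A : alg S) (t : term S 3) (x y z : A) : A :=
  teval (fun i : 'I_3 => match val i with 0 => x | 1 => y | _ => z end) t.

Definition is_bdl (T : Type) (m j : T -> T -> T) (b t : T) : Prop :=
  [/\ (forall x y z, m x (m y z) = m (m x y) z /\ j x (j y z) = j (j x y) z),
      (forall x y, m x y = m y x /\ j x y = j y x),
      (forall x y, m x (j x y) = x /\ j x (m x y) = x),
      (forall x y z, m x (j y z) = j (m x y) (m x z))
    & (forall x, j b x = x /\ m t x = x)].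

(* A variety (equational class, Birkhoff) with a term reduct in the
   category of bounded distributive lattices. *)
Record Variety := {
  vsig : Sig;
  vSigma : forall n, term vsig n -> term vsig n -> Prop;
  vmeet : term vsig 2;  vjoin : term vsig 2;
  vbot : term vsig 0;   vtop : term vsig 0;
  vreduct : forall A : alg vsig, models vSigma A ->
     is_bdl (top2 vmeet (A:=A)) (top2 vjoin (A:=A)) (top0 A vbot) (top0 A vtop) }.

Arguments vSigma : clear implicits.
Arguments vmeet : clear implicits.
Arguments vjoin : clear implicits.
Arguments vbot : clear implicits.
Arguments vtop : clear implicits.

Definition Aobj (V : Variety) := { A : alg (vsig V) | models (vSigma V) A }.
Definition Aalg (V : Variety) (A : Aobj V) : alg (vsig V) := proj1_sig A.
Coercion Aalg : Aobj >-> alg.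

Definition lmeet (V : Variety) (A : alg (vsig V)) := top2 (A:=A) (vmeet V).
Definition ljoin (V : Variety) (A : alg (vsig V)) := top2 (A:=A) (vjoin V).
Definition lbot (V : Variety) (A : alg (vsig V)) := top0 A (vbot V).
Definition ltop (V : Variety) (A : alg (vsig V)) := top0 A (vtop V).

Definition ahom (S : Sig) (A B : alg S) :=
  { f : A -> B | forall o (args : 'I_(ar o) -> A), f (@aop S A o args) = @aop S B o (fun i => f (args i)) }.

Definition ahom_id (S : Sig) (A : alg S) : ahom A A.
Proof. by exists (fun x => x). Defined.

Lemma ahom_comp_proof (S : Sig) (A B C : alg S) (g : ahom B C) (f : ahom A B) :
  forall o (args : 'I_(ar o) -> A),
   proj1_sig g (proj1_sig f (@aop S A o args)) = @aop S C o (fun i => proj1_sig g (proj1_sig f (args i))).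
Proof. by move=> o args; rewrite (proj2_sig f) (proj2_sig g). Qed.

Definition ahom_comp (S : Sig) (A B C : alg S) (g : ahom B C) (f : ahom A B) : ahom A C :=
  exist _ (fun x => proj1_sig g (proj1_sig f x)) (ahom_comp_proof g f).

Definition subuniverse (S : Sig) (A : alg S) (B : A -> Prop) : Prop :=
  forall o (args : 'I_(ar o) -> A), (forall i, B (args i)) -> B (@aop S A o args).

Definition subuniverse2 (S : Sig) (A : alg S) (R : A -> A -> Prop) : Prop :=
  forall o (args : 'I_(ar o) -> A * A), (forall i, R (args i).1 (args i).2) ->
    R (@aop S A o (fun i => (args i).1)) (@aop S A o (fun i => (args i).2)).

Definition finite_alg (S : Sig) (A : alg S) : Prop := exists l : list A, forall x : A, In x l.

Definition has_majority_term (S : Sig) (A : alg S) : Prop :=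
  exists t : term S 3, forall x y : A,
    [/\ top3 t x x y = x, top3 t x y x = x & top3 t y x x = x].

Definition semi_primal (S : Sig) (A : alg S) : Prop :=
  has_majority_term A /\
  forall R : A -> A -> Prop, subuniverse2 R ->
    (exists B1 B2 : A -> Prop, [/\ subuniverse B1, subuniverse B2 &
                                  forall x y, R x y <-> B1 x /\ B2 y])
    \/ (exists B : A -> Prop, subuniverse B /\ forall x y, R x y <-> x = y /\ B x).

Definition is_priestley (T : Type) (le : T -> T -> Prop) (open : (T -> Prop) -> Prop) : Prop :=
  [/\
      (forall x, le x x) /\ (forall x y z, le x y -> le y z -> le x z) /\
      (forall x y, le x y -> le y x -> x = y),
      open (fun _ => True) /\
      (forall U V, open U -> open V -> open (fun x => U x /\ V x)) /\
      (forall (I : Type) (F : I -> T -> Prop), (forall i, open (F i)) ->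
          open (fun x => exists i, F i x)),
      (forall (I : Type) (F : I -> T -> Prop), (forall i, open (F i)) ->
          (forall x, exists i, F i x) ->
          exists l : list I, forall x, exists i, In i l /\ F i x)
    &
      (forall x y, ~ le x y -> exists U : T -> Prop,
          [/\ open U, open (fun z => ~ U z), (forall a b, le a b -> U a -> U b), U x & ~ U y])].

Record PSpace := { pcar :> Type; ple : pcar -> pcar -> Prop;
                   popen : (pcar -> Prop) -> Prop; ps_ax : is_priestley ple popen }.

Record PMor (X Y : PSpace) := { pmap :> X -> Y;
  pmap_mono : forall x y, ple x y -> ple (pmap x) (pmap y);
  pmap_cont : forall U, popen U -> popen (fun x => U (pmap x)) }.

Definition PData := { T : Type & ((T -> T -> Prop) * ((T -> Prop) -> Prop))%type }.
Definition ps_data (X : PSpace) : PData := existT _ (pcar X) (@ple X, @popen X).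

(* H(A^flat): bounded lattice homomorphisms A^flat -> 2, with the order
   and (product, i.e. pointwise-convergence) topology induced from 2^A *)
Definition Hcar (V : Variety) (A : alg (vsig V)) : Type :=
  { f : A -> bool | [/\ (forall x y, f (lmeet x y) = f x && f y),
                        (forall x y, f (ljoin x y) = f x || f y),
                        f (lbot A) = false & f (ltop A) = true] }.

Definition Hle (V : Variety) (A : alg (vsig V)) (f g : Hcar A) : Prop :=
  forall x, proj1_sig f x -> proj1_sig g x.

Definition Hopen (V : Variety) (A : alg (vsig V)) (U : Hcar A -> Prop) : Prop :=
  forall f, U f -> exists s : list (A * bool),
    (forall p, In p s -> proj1_sig f p.1 = p.2) /\
    (forall g, (forall p, In p s -> proj1_sig g p.1 = p.2) -> U g).

Definition Hdata (V : Variety) (A : alg (vsig V)) : PData :=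
  existT _ (Hcar A) (@Hle V A, @Hopen V A).

(* K(Y): continuous order-preserving maps Y -> 2 (2 discrete) *)
Definition Kcar (Y : PSpace) : Type :=
  { f : Y -> bool | [/\ (forall x y, ple x y -> f x -> f y),
                        popen (fun x => f x = true) & popen (fun x => f x = false)] }.

Definition cast (T U : Type) (p : T = U) (x : T) : U := match p in _ = U' return U' with erefl => x end.

Definition castD (X : PSpace) (V : Variety) (A : alg (vsig V)) (p : ps_data X = Hdata A) :
  pcar X -> Hcar A := cast (f_equal (@projT1 _ _) p).

Record Cat := {
  Ob : Type;
  Hom : Ob -> Ob -> Type;
  cid : forall a, Hom a a;
  ccomp : forall a b c, Hom b c -> Hom a b -> Hom a c;
  ccomp_idl : forall a b (f : Hom a b), ccomp (cid b) f = f;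
  ccomp_idr : forall a b (f : Hom a b), ccomp f (cid a) = f;
  ccomp_assoc : forall a b c d (h : Hom c d) (g : Hom b c) (f : Hom a b),
      ccomp h (ccomp g f) = ccomp (ccomp h g) f }.
Arguments cid {_} _.
Arguments Hom : clear implicits.
Arguments Ob : clear implicits.
Arguments ccomp {_ _ _ _} _ _.

Record PCat := {
  pcat :> Cat;
  fob : Ob pcat -> PSpace;
  fmor : forall a b, Hom pcat a b -> PMor (fob a) (fob b);
  fmor_id : forall a (x : fob a), fmor (cid a) x = x;
  fmor_comp : forall a b c (g : Hom pcat b c) (f : Hom pcat a b) (x : fob a),
      fmor (ccomp g f) x = fmor g (fmor f x) }.
Arguments fmor {p a b}.

Record RPDuality (V : Variety) (X : PCat) := {
  Dob : Aobj V -> Ob X;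
  Dmor : forall A B : Aobj V, ahom A B -> Hom X (Dob B) (Dob A);
  Eob : Ob X -> Aobj V;
  Emor : forall Y Z : Ob X, Hom X Y Z -> ahom (Eob Z) (Eob Y);
  Dmor_id : forall A : Aobj V, Dmor (ahom_id A) = cid (Dob A);
  Dmor_comp : forall (A B C : Aobj V) (g : ahom B C) (f : ahom A B),
      Dmor (ahom_comp g f) = ccomp (Dmor f) (Dmor g);
  Emor_id : forall (Y : Ob X) (u : Eob Y), proj1_sig (Emor (cid Y)) u = u;
  Emor_comp : forall (Y Z W : Ob X) (g : Hom X Z W) (f : Hom X Y Z) (u : Eob W),
      proj1_sig (Emor (ccomp g f)) u = proj1_sig (Emor f) (proj1_sig (Emor g) u);
  unit : forall A : Aobj V, ahom A (Eob (Dob A));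
  unit_nat : forall (A B : Aobj V) (h : ahom A B) (a : A),
      proj1_sig (Emor (Dmor h)) (proj1_sig (unit A) a) = proj1_sig (unit B) (proj1_sig h a);
  unit_iso : forall A : Aobj V, exists g : ahom (Eob (Dob A)) A,
      (forall a, proj1_sig g (proj1_sig (unit A) a) = a) /\
      (forall u, proj1_sig (unit A) (proj1_sig g u) = u);
  counit : forall Y : Ob X, Hom X Y (Dob (Eob Y));
  counit_nat : forall (Y Z : Ob X) (psi : Hom X Y Z),
      ccomp (Dmor (Emor psi)) (counit Y) = ccomp (counit Z) psi;
  counit_iso : forall Y : Ob X, exists g : Hom X (Dob (Eob Y)) Y,
      ccomp g (counit Y) = cid Y /\ ccomp (counit Y) g = cid (Dob (Eob Y));
  flatD : forall A : Aobj V, ps_data (fob (Dob A)) = Hdata A;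
  flatD_mor : forall (A B : Aobj V) (h : ahom A B) (phi : fob (Dob B)) (a : A),
      proj1_sig (castD (flatD A) (fmor (Dmor h) phi)) a
      = proj1_sig (castD (flatD B) phi) (proj1_sig h a);
  (* ^flat o E = K o ^flat (carrier, and pointwise bounded-lattice operations) *)
  flatE : forall Y : Ob X, acar (Eob Y) = Kcar (fob Y);
  flatE_meet : forall (Y : Ob X) (u v : Eob Y) (y : fob Y),
      proj1_sig (cast (flatE Y) (lmeet u v)) y
      = proj1_sig (cast (flatE Y) u) y && proj1_sig (cast (flatE Y) v) y;
  flatE_join : forall (Y : Ob X) (u v : Eob Y) (y : fob Y),
      proj1_sig (cast (flatE Y) (ljoin u v)) y
      = proj1_sig (cast (flatE Y) u) y || proj1_sig (cast (flatE Y) v) y;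
  flatE_bot : forall (Y : Ob X) (y : fob Y), proj1_sig (cast (flatE Y) (lbot (Eob Y))) y = false;
  flatE_top : forall (Y : Ob X) (y : fob Y), proj1_sig (cast (flatE Y) (ltop (Eob Y))) y = true;
  flatE_mor : forall (Y Z : Ob X) (psi : Hom X Y Z) (u : Eob Z) (y : fob Y),
      proj1_sig (cast (flatE Y) (proj1_sig (Emor psi) u)) y
      = proj1_sig (cast (flatE Z) u) (fmor psi y);
  flat_unit : forall (A : Aobj V) (a : A) (phi : fob (Dob A)),
      proj1_sig (cast (flatE (Dob A)) (proj1_sig (unit A) a)) phi
      = proj1_sig (castD (flatD A) phi) a;
  flat_counit : forall (Y : Ob X) (y : fob Y) (u : Eob Y),
      proj1_sig (castD (flatD (Eob Y)) (fmor (counit Y) y)) u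
      = proj1_sig (cast (flatE Y) u) y }.

Definition jointly_surj (X : PCat) (Z Y : Ob X) (f1 f2 : Hom X Z Y) : Prop :=
  forall y : fob Y, exists x : fob Z, fmor f1 x = y \/ fmor f2 x = y.

Definition disj_union_images (X : PCat) (Z Y : Ob X) (f1 f2 : Hom X Z Y) : Prop :=
  [/\ (forall y : fob Y, exists x : fob Z, fmor f1 x = y \/ fmor f2 x = y),
      (forall x x' : fob Z, fmor f1 x <> fmor f2 x')
    & (forall x x' : fob Z, ~ ple (fmor f1 x) (fmor f2 x') /\ ~ ple (fmor f2 x') (fmor f1 x))].

(* Main.v *)
Require Import Defs.
From mathcomp Require Import all_boot.
From Stdlib Require Import Classical ClassicalEpsilon FunctionalExtensionality ProofIrrelevance.
From Stdlib Require List.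

Set Implicit Arguments.
Unset Strict Implicit.
Unset Printing Implicit Defensive.



Lemma sig_eq (T : Type) (P : T -> Prop) (x y : sig P) : proj1_sig x = proj1_sig y -> x = y.
Proof. case: x => x px; case: y => y py /= exy; subst y; f_equal; apply: proof_irrelevance. Qed.

Definition dec (P : Prop) : bool := if excluded_middle_informative P then true else false.
Lemma decR (P : Prop) : reflect P (dec P).
Proof. rewrite /dec; case: excluded_middle_informative => H; by constructor. Qed.

Lemma castK (T U : Type) (p : T = U) x : cast (esym p) (cast p x) = x.
Proof. by move: x; case: U / p. Qed.
Lemma castKV (T U : Type) (p : T = U) x : cast p (cast (esym p) x) = x.
Proof. by move: x; case: U / p. Qed.

Lemma sub_teval (S : Sig) (A : alg S) (B : A -> Prop) : subuniverse B ->
  forall n (v : 'I_n -> A) t, (forall i, B (v i)) -> B (teval v t).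
Proof. move=> HB n v t Hv; elim: t => [i|o args IH] /=; [exact: Hv| apply: HB => i; exact: IH]. Qed.

Lemma sub2_teval (S : Sig) (A : alg S) (R : A -> A -> Prop) : subuniverse2 R ->
  forall n (v1 v2 : 'I_n -> A) t, (forall i, R (v1 i) (v2 i)) -> R (teval v1 t) (teval v2 t).
Proof.
move=> HR n v1 v2 t Hv; elim: t => [i|o args IH] /=; first exact: Hv.
exact: (HR o (fun j => (teval v1 (args j), teval v2 (args j))) IH).
Qed.

Fixpoint tsubst (S : Sig) n m (s : 'I_n -> term S m) (t : term S n) : term S m :=
  match t with tvar i => s i | tapp o args => tapp (fun j => tsubst s (args j)) end.

Lemma teval_subst (S : Sig) (A : alg S) n m (v : 'I_m -> A) (s : 'I_n -> term S m) t :
  teval v (tsubst s t) = teval (fun i => teval v (s i)) t.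
Proof.
elim: t => [i|o args IH] //=; congr aop; apply: functional_extensionality => j; exact: IH.
Qed.

Section Lat.
Variables (V : Variety) (A : alg (vsig V)) (HA : models (vSigma V) A).

Let L := vreduct HA.
Lemma meetC (x y : A) : lmeet x y = lmeet y x. Proof. by case: L => _ h _ _ _; case: (h x y). Qed.
Lemma joinC (x y : A) : ljoin x y = ljoin y x. Proof. by case: L => _ h _ _ _; case: (h x y). Qed.
Lemma meetA (x y z : A) : lmeet x (lmeet y z) = lmeet (lmeet x y) z.
Proof. by case: L => h _ _ _ _; case: (h x y z). Qed.
Lemma joinA (x y z : A) : ljoin x (ljoin y z) = ljoin (ljoin x y) z.
Proof. by case: L => h _ _ _ _; case: (h x y z). Qed.
Lemma meetKj (x y : A) : lmeet x (ljoin x y) = x. Proof. by case: L => _ _ h _ _; case: (h x y). Qed.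
Lemma joinKm (x y : A) : ljoin x (lmeet x y) = x. Proof. by case: L => _ _ h _ _; case: (h x y). Qed.
Lemma meetDj (x y z : A) : lmeet x (ljoin y z) = ljoin (lmeet x y) (lmeet x z).
Proof. by case: L => _ _ _ h _; exact: h. Qed.
Lemma join0 (x : A) : ljoin (lbot A) x = x. Proof. by case: L => _ _ _ _ h; case: (h x). Qed.
Lemma meet1 (x : A) : lmeet (ltop A) x = x. Proof. by case: L => _ _ _ _ h; case: (h x). Qed.

Lemma meetxx (x : A) : lmeet x x = x.
Proof. by have := meetKj x (lmeet x x); rewrite joinKm. Qed.
Lemma joinxx (x : A) : ljoin x x = x.
Proof. by have := joinKm x (ljoin x x); rewrite meetKj. Qed.
Lemma meet0 (x : A) : lmeet x (lbot A) = lbot A.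
Proof. by rewrite meetC -{1}(join0 x) meetKj. Qed.
Lemma meetx1 (x : A) : lmeet x (ltop A) = x.
Proof. by rewrite meetC meet1. Qed.
Lemma joinx0 (x : A) : ljoin x (lbot A) = x.
Proof. by rewrite joinC join0. Qed.

Definition le (x y : A) := lmeet x y = x.
Lemma le_trans x y z : le x y -> le y z -> le x z.
Proof. by rewrite /le => h1 h2; rewrite -h1 -meetA h2. Qed.
Lemma le_antisym x y : le x y -> le y x -> x = y.
Proof. by rewrite /le => h1 h2; rewrite -h1 meetC h2. Qed.
Lemma le_refl x : le x x. Proof. exact: meetxx. Qed.
Lemma le_bot x : le (lbot A) x. Proof. by rewrite /le meetC meet0. Qed.
Lemma le_top x : le x (ltop A). Proof. exact: meetx1. Qed.
Lemma le_meetl x y : le (lmeet x y) x.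
Proof. by rewrite /le meetC meetA meetxx. Qed.
Lemma le_meetr x y : le (lmeet x y) y.
Proof. by rewrite meetC; apply: le_meetl. Qed.
Lemma le_joinl x y : le x (ljoin x y). Proof. exact: meetKj. Qed.
Lemma le_joinr x y : le y (ljoin x y). Proof. by rewrite joinC; apply: le_joinl. Qed.
Lemma le_meet c x y : le c x -> le c y -> le c (lmeet x y).
Proof. by rewrite /le => h1 h2; rewrite meetA h1 h2. Qed.
Lemma le_join x y z : le x z -> le y z -> le (ljoin x y) z.
Proof.
by rewrite /le => h1 h2; rewrite meetC meetDj (meetC z x) (meetC z y) h1 h2.
Qed.
End Lat.



Lemma count_sub_le (T : Type) (p q : T -> bool) (l : list T) :
  (forall x, p x -> q x) -> count p l <= count q l.
Proof.
move=> H; elim: l => //= x l IH.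
have: p x <= q x by case: (boolP (p x)) => // /H ->.
move=> h; exact: leq_add.
Qed.

Lemma count_sub_lt (T : Type) (p q : T -> bool) (l : list T) z :
  (forall x, p x -> q x) -> List.In z l -> q z -> ~~ p z -> count p l < count q l.
Proof.
move=> H; elim: l => //= x l IH [<-|Hz] qz pz.
  rewrite (negbTE pz) qz add0n add1n ltnS; exact: count_sub_le.
have: p x <= q x by case: (boolP (p x)) => // /H ->.
move=> h; rewrite -addnS; exact: leq_add h (IH Hz qz pz).
Qed.

Lemma Hcar_eq (V : Variety) (A : alg (vsig V)) (f g : Hcar A) :
  (forall a, proj1_sig f a = proj1_sig g a) -> f = g.
Proof. move=> h; apply: sig_eq; exact: functional_extensionality. Qed.

Section Sep.
Variables (V : Variety) (A : alg (vsig V)) (HA : models (vSigma V) A).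

Lemma Hmeet (f : Hcar A) x y : proj1_sig f (lmeet x y) = proj1_sig f x && proj1_sig f y.
Proof. by case: f => f /= [h _ _ _]. Qed.
Lemma Hjoin (f : Hcar A) x y : proj1_sig f (ljoin x y) = proj1_sig f x || proj1_sig f y.
Proof. by case: f => f /= [_ h _ _]. Qed.
Lemma Hbot (f : Hcar A) : proj1_sig f (lbot A) = false.
Proof. by case: f => f /= [_ _ h _]. Qed.
Lemma Htop (f : Hcar A) : proj1_sig f (ltop A) = true.
Proof. by case: f => f /= [_ _ _ h]. Qed.
Lemma Hmono (f : Hcar A) x y : le x y -> proj1_sig f x -> proj1_sig f y.
Proof. by move=> h fx; move: (Hmeet f x y); rewrite h fx. Qed.

Variable finA : finite_alg A.

Lemma exists_min (P : A -> Prop) d0 : P d0 ->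
  exists c, P c /\ forall d, P d -> le d c -> d = c.
Proof.
case: finA => l Hl.
pose N d := count (fun z => dec (le z d)) l.
suff: forall n d, N d <= n -> P d -> exists c, P c /\ forall d, P d -> le d c -> d = c.
  by move=> H; exact: (H (N d0) d0 (leqnn _)).
elim=> [|n IH] d Hn Pd.
all: case: (classic (forall d', P d' -> le d' d -> d' = d)) => [H|H]; [by exists d|].
all: case: (not_all_ex_not _ _ H) => d' H'.
all: have Pd' : P d' by apply: NNPP => h; apply: H' => /h.
all: have led' : le d' d by apply: NNPP => h; apply: H' => _ /h.
all: have nd' : d' <> d by move=> h; apply: H' => _ _.
all: have Hlt : N d' < N d by
  apply: (count_sub_lt (z := d)) => //;
  [ move=> x /decR h; apply/decR; exact: (le_trans HA) h led'
  | exact/decR/(le_refl HA)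
  | by apply/decR => h; apply: nd'; exact: (le_antisym HA) ].
  by move: (leq_trans Hlt Hn).
apply: (IH d') => //; exact: leq_trans Hlt Hn.
Qed.

Lemma sep a b : ~ le a b -> exists f : Hcar A, proj1_sig f a = true /\ proj1_sig f b = false.
Proof.
move=> nab.
have [c [[ca ncb] cmin]] := @exists_min (fun d => le d a /\ ~ le d b) a (conj (le_refl HA a) nab).
have jp : forall x y, le c (ljoin x y) -> le c x \/ le c y.
  move=> x y hc; case: (classic (le c x)) => hx; [by left|].
  case: (classic (le c y)) => hy; [by right|].
  exfalso; apply: ncb.
  have hcx : le (lmeet c x) b.
    apply: NNPP => h; apply: hx; apply: cmin; last exact: (le_meetl HA).
    split=> //; exact: (le_trans HA) (le_meetl _ _ _) ca.
  have hcy : le (lmeet c y) b.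
    apply: NNPP => h; apply: hy; apply: cmin; last exact: (le_meetl HA).
    split=> //; exact: (le_trans HA) (le_meetl _ _ _) ca.
  have -> : c = ljoin (lmeet c x) (lmeet c y) by rewrite -(meetDj HA).
  exact: (le_join HA).
have f_prop :
  [/\ (forall x y, dec (le c (lmeet x y)) = dec (le c x) && dec (le c y)),
      (forall x y, dec (le c (ljoin x y)) = dec (le c x) || dec (le c y)),
      dec (le c (lbot A)) = false & dec (le c (ltop A)) = true].
  split.
  - move=> x y; case: (decR (le c (lmeet x y))) => h1;
      case: (decR (le c x)) => h2; case: (decR (le c y)) => h3 //=;
    exfalso; first [ apply: h3; exact: (le_trans HA) h1 (le_meetr HA _ _)
                        | apply: h2; exact: (le_trans HA) h1 (le_meetl HA _ _)
                        | apply: h1; exact: (le_meet HA) h2 h3 ].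
  - move=> x y; case: (decR (le c (ljoin x y))) => h1;
      case: (decR (le c x)) => h2; case: (decR (le c y)) => h3 //=;
    exfalso; first [ by case: (jp _ _ h1)
                        | apply: h1; exact: (le_trans HA) h2 (le_joinl HA _ _)
                        | apply: h1; exact: (le_trans HA) h3 (le_joinr HA _ _) ].
  - by case: decR => // h; exfalso; apply: ncb; exact: (le_trans HA) h (le_bot _ _).
  - by case: decR => // h; exfalso; apply: h; exact: (le_top HA).
exists (exist _ (fun x => dec (le c x)) f_prop) => /=; split.
  by apply/decR.
by case: decR => // /ncb.
Qed.

Lemma all_top a : (forall f : Hcar A, proj1_sig f a = true) -> a = ltop A.
Proof.
move=> H; case: (classic (le (ltop A) a)) => h.
  by apply: (le_antisym HA) => //; exact: (le_top HA).
by case: (sep h) => f [_ hf]; rewrite H in hf.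
Qed.

Lemma all_bot a : (forall f : Hcar A, proj1_sig f a = false) -> a = lbot A.
Proof.
move=> H; case: (classic (le a (lbot A))) => h.
  by apply: (le_antisym HA) => //; exact: (le_bot HA).
by case: (sep h) => f [hf _]; rewrite H in hf.
Qed.
End Sep.



Section Sub.
Variables (S : Sig) (A : alg S) (R : A -> A -> Prop) (HR : subuniverse2 R).

Definition Rcar := { p : A * A | R p.1 p.2 }.
Definition Rop (o : Op S) (args : 'I_(ar o) -> Rcar) : Rcar :=
  exist (fun p : A * A => R p.1 p.2)
    (aop (fun i => (proj1_sig (args i)).1), aop (fun i => (proj1_sig (args i)).2))
    (@HR o (fun i => proj1_sig (args i)) (fun i => proj2_sig (args i))).
Definition subalg : alg S := {| acar := Rcar; aop := Rop |}.

Lemma teval_sub n (v : 'I_n -> subalg) t :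
  proj1_sig (teval v t) = (teval (fun i => (proj1_sig (v i)).1) t, teval (fun i => (proj1_sig (v i)).2) t).
Proof.
elim: t => [i|o args IH] /=; first by case: (proj1_sig (v i)).
congr pair; congr aop; apply: functional_extensionality => j; by rewrite IH.
Qed.

Lemma subalg_models (Sigma : forall n, term S n -> term S n -> Prop) :
  models Sigma A -> models Sigma subalg.
Proof.
move=> HA n l r H v; apply: sig_eq; rewrite !teval_sub; congr pair; exact: HA.
Qed.

Lemma subalg_finite : finite_alg A -> finite_alg subalg.
Proof.
case=> l Hl.
pose mk (a b : A) : list subalg :=
  match excluded_middle_informative (R a b) with
  | left H => [:: exist (fun p : A * A => R p.1 p.2) (a, b) H] | right _ => [::] end.
exists (List.flat_map (fun a => List.flat_map (fun b => mk a b) l) l).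
case=> [[a b] H]; apply/List.in_flat_map; exists a; split; first exact: Hl.
apply/List.in_flat_map; exists b; split; first exact: Hl.
rewrite /mk; case: excluded_middle_informative => [H'|//].
by left; apply: sig_eq.
Qed.
End Sub.

Lemma teval_ext (S : Sig) (A : alg S) n (v1 v2 : 'I_n -> A) t :
  (forall i, v1 i = v2 i) -> teval v1 t = teval v2 t.
Proof. by move=> h; rewrite (functional_extensionality _ _ h). Qed.

Section SubV.
Variables (V : Variety) (A : alg (vsig V)) (R : A -> A -> Prop) (HR : subuniverse2 R).

Lemma sub_meet (x y : subalg HR) :
  proj1_sig (lmeet x y) = (lmeet (proj1_sig x).1 (proj1_sig y).1, lmeet (proj1_sig x).2 (proj1_sig y).2).
Proof.
rewrite /lmeet /top2 teval_sub; congr pair; apply: teval_ext => i; by case: (val i == 0).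
Qed.

Lemma R_top2 t x1 x2 y1 y2 : R x1 x2 -> R y1 y2 -> R (top2 t x1 y1) (top2 t x2 y2).
Proof.
move=> h1 h2; apply: sub2_teval => // i; by case: (val i == 0).
Qed.
End SubV.



Lemma mj (V : Variety) (B : alg (vsig V)) (HB : models (vSigma V) B) (finB : finite_alg B)
  (h : Hcar B) : exists m j, [/\ proj1_sig h m = true, proj1_sig h j = false,
     (forall r, proj1_sig h r -> le m r) & (forall r, proj1_sig h r = false -> le r j)].
Proof.
case: finB => l Hl.
exists (foldr (fun r acc => if proj1_sig h r then lmeet r acc else acc) (ltop B) l).
exists (foldr (fun r acc => if proj1_sig h r then acc else ljoin r acc) (lbot B) l).
split.
- elim: l {Hl} => /= [|x l IH]; first exact: Htop.
  by case hx: (proj1_sig h x) => //; rewrite Hmeet hx IH.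
- elim: l {Hl} => /= [|x l IH]; first exact: Hbot.
  by case hx: (proj1_sig h x) => //; rewrite Hjoin hx IH.
- move=> r hr; move: (Hl r); elim: l {Hl} => //= x l IH [->|Hr].
    rewrite hr /=. exact: (le_meetl HB r _). 
  case: (proj1_sig h x); [exact: (le_trans HB (le_meetr HB _ _) (IH Hr)) | exact: IH Hr].
- move=> r hr; move: (Hl r); elim: l {Hl} => //= x l IH [->|Hr].
    by rewrite hr /=; exact: (le_joinl HB r _).
  case: (proj1_sig h x); [exact: IH Hr | exact: (le_trans HB (IH Hr) (le_joinr HB _ _))].
Qed.

Section Ext.
Variables (V : Variety) (A : alg (vsig V)) (HA : models (vSigma V) A) (finA : finite_alg A).
Variables (R : A -> A -> Prop) (HR : subuniverse2 R).

Let HS := @subalg_models _ _ _ HR _ HA.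
Let finS := @subalg_finite _ _ _ HR finA.

Lemma ext_aux (h : Hcar (subalg HR)) (p : subalg HR -> A) m j :
  (forall x y, p (lmeet x y) = lmeet (p x) (p y)) ->
  (forall r, proj1_sig h r -> le m r) -> (forall r, proj1_sig h r = false -> le r j) ->
  ~ le (p m) (p j) -> exists f : Hcar A, forall r, proj1_sig h r = proj1_sig f (p r).
Proof.
move=> pm hm hj nle; case: (sep HA finA nle) => f [fm fj]; exists f => r.
case hr: (proj1_sig h r).
  have := hm r hr; rewrite /le => e.
  symmetry; apply: (Hmono (f := f) (x := p m)) => //.
  by rewrite /le -pm e.
have := hj r hr; rewrite /le => e.
by rewrite -e pm Hmeet fj andbF.
Qed.

Lemma pm1 (x y : subalg HR) : (proj1_sig (lmeet x y)).1 = lmeet (proj1_sig x).1 (proj1_sig y).1.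
Proof. by rewrite sub_meet. Qed.
Lemma pm2 (x y : subalg HR) : (proj1_sig (lmeet x y)).2 = lmeet (proj1_sig x).2 (proj1_sig y).2.
Proof. by rewrite sub_meet. Qed.

Lemma ext (h : Hcar (subalg HR)) : exists f : Hcar A,
  (forall r, proj1_sig h r = proj1_sig f (proj1_sig r).1) \/
  (forall r, proj1_sig h r = proj1_sig f (proj1_sig r).2).
Proof.
have [m [j [hm hj Hm Hj]]] := mj HS finS h.
have nle : ~ le m j.
  by rewrite /le => e; move: (Hmeet h m j); rewrite e hm hj.
case: (classic (le (proj1_sig m).1 (proj1_sig j).1)) => h1.
  case: (classic (le (proj1_sig m).2 (proj1_sig j).2)) => h2.
    by exfalso; apply: nle; apply: sig_eq; rewrite sub_meet h1 h2; case: (proj1_sig m).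
  have [f Hf] := @ext_aux h (fun r => (proj1_sig r).2) m j
    pm2 Hm Hj h2.
  by exists f; right.
have [f Hf] := @ext_aux h (fun r => (proj1_sig r).1) m j
  pm1 Hm Hj h1.
by exists f; left.
Qed.
End Ext.



Lemma pdata_all (s s' : PData) (p : s = s') :
  (forall U, (projT2 s').2 U) -> forall U, (projT2 s).2 U.
Proof. by case: s' / p. Qed.

Lemma Hopen_all (V : Variety) (B : alg (vsig V)) : finite_alg B -> forall U : Hcar B -> Prop, Hopen U.
Proof.
case=> l Hl U f Uf; exists (List.map (fun a => (a, proj1_sig f a)) l); split.
  by move=> [a b] /List.in_map_iff [a' [[<- <-] _]].
move=> g Hg; have -> : g = f; last done.
apply: Hcar_eq => a; apply: (Hg (a, proj1_sig f a)); apply/List.in_map_iff; exists a; split => //.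
Qed.

Lemma majority (V : Variety) (A : alg (vsig V)) (HA : models (vSigma V) A) : has_majority_term A.
Proof.
pose bin (t : term (vsig V) 2) (a b : term (vsig V) 3) :=
  tsubst (fun i : 'I_2 => if val i == 0 then a else b) t.
pose X := tvar (vsig V) (@Ordinal 3 0 isT).
pose Y := tvar (vsig V) (@Ordinal 3 1 isT).
pose Z := tvar (vsig V) (@Ordinal 3 2 isT).
pose M := bin (vmeet V); pose J := bin (vjoin V).
exists (J (J (M X Y) (M Y Z)) (M X Z)).
have EM : forall a b (v : 'I_3 -> A), teval v (M a b) = lmeet (teval v a) (teval v b).
  move=> a b v; rewrite /M /bin teval_subst /lmeet /top2; apply: teval_ext => i; by case: (val i == 0).
have EJ : forall a b (v : 'I_3 -> A), teval v (J a b) = ljoin (teval v a) (teval v b).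
  move=> a b v; rewrite /J /bin teval_subst /ljoin /top2; apply: teval_ext => i; by case: (val i == 0).
move=> x y; rewrite /top3 !EJ !EM /=; split.
- by rewrite (meetxx HA) !(joinKm HA).
- by rewrite (meetC HA y x) (joinxx HA) (meetxx HA) (joinC HA) (joinKm HA).
- by rewrite (meetxx HA) (meetC HA y x) (joinC HA (lmeet x y) x) !(joinKm HA).
Qed.

Section Dual.
Variables (V : Variety) (X : PCat) (Dl : RPDuality V X).

Lemma castD_surj (B : Aobj V) (f : Hcar B) : exists x : fob (Dob Dl B), castD (flatD Dl B) x = f.
Proof. exists (cast (esym (f_equal (@projT1 _ _) (flatD Dl B))) f); rewrite /castD; exact: castKV. Qed.

Lemma castD_inj (B : Aobj V) (x y : fob (Dob Dl B)) :
  castD (flatD Dl B) x = castD (flatD Dl B) y -> x = y.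
Proof.
move=> h; have := f_equal (cast (esym (f_equal (@projT1 _ _) (flatD Dl B)))) h.
by rewrite /castD !castK.
Qed.

Lemma allopen (B : Aobj V) (finB : finite_alg B) (U : fob (Dob Dl B) -> Prop) : popen U.
Proof. exact: (pdata_all (flatD Dl B) (Hopen_all finB) U). Qed.

Lemma eval_surj (B : Aobj V) (k : Kcar (fob (Dob Dl B))) :
  exists b : B, forall y, proj1_sig (castD (flatD Dl B) y) b = proj1_sig k y.
Proof.
have [g [g1 g2]] := unit_iso Dl B.
exists (proj1_sig g (cast (esym (flatE Dl (Dob Dl B))) k)) => y.
by rewrite -flat_unit g2 castKV.
Qed.

Lemma faithful (Y Z : Ob X) (phi1 phi2 : Hom X Y Z) :
  (forall u, proj1_sig (Emor Dl phi1) u = proj1_sig (Emor Dl phi2) u) -> phi1 = phi2.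
Proof.
move=> H.
have Ee : Emor Dl phi1 = Emor Dl phi2 by apply: sig_eq; exact: functional_extensionality.
have [g [gc _]] := counit_iso Dl Z.
have e1 : forall phi : Hom X Y Z, phi = ccomp g (ccomp (counit Dl Z) phi).
  by move=> phi; rewrite ccomp_assoc gc ccomp_idl.
by rewrite (e1 phi1) (e1 phi2) -!counit_nat Ee.
Qed.

Lemma sep_elem (B C : Aobj V) (finB : finite_alg B) (finC : finite_alg C) (pa pb : ahom B C) :
  (forall y, exists x, fmor (Dmor Dl pa) x = y \/ fmor (Dmor Dl pb) x = y) ->
  (forall x x', fmor (Dmor Dl pa) x <> fmor (Dmor Dl pb) x') ->
  (forall x x', ~ ple (fmor (Dmor Dl pa) x) (fmor (Dmor Dl pb) x')) ->
  exists r : B, proj1_sig pa r = ltop C /\ proj1_sig pb r = lbot C.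
Proof.
move=> cov dsj inc.
pose e y := dec (exists x, fmor (Dmor Dl pa) x = y).
have ke : [/\ (forall x y, ple x y -> e x -> e y), popen (fun x => e x = true)
            & popen (fun x => e x = false)].
  split; try exact: allopen.
  move=> y y' hle /decR [x hx]; apply/decR; case: (cov y') => x' [h|h]; first by exists x'.
  by exfalso; apply: (inc x x'); rewrite hx h.
have [r Hr] := eval_surj (exist _ e ke).
exists r; split.
  apply: (all_top (proj2_sig C) finC) => f; have [x <-] := castD_surj f.
  by rewrite -flatD_mor Hr /=; apply/decR; exists x.
apply: (all_bot (proj2_sig C) finC) => f; have [x <-] := castD_surj f.
rewrite -flatD_mor Hr /= /e; case: decR => // -[x' hx']; by case: (dsj x' x hx').
Qed.

Lemma link (A : Aobj V) (Y : Ob X) (phi : Hom X (Dob Dl A) Y) (g : ahom (Eob Dl (Dob Dl A)) A)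
  (g2 : forall u, proj1_sig (unit Dl A) (proj1_sig g u) = u) u x :
  proj1_sig (cast (flatE Dl Y) u) (fmor phi x)
  = proj1_sig (castD (flatD Dl A) x) (proj1_sig g (proj1_sig (Emor Dl phi) u)).
Proof. by rewrite -flatE_mor -flat_unit g2. Qed.
End Dual.



Theorem theorem3p5 (V : Variety) (X : PCat) (R : RPDuality V X) (A : Aobj V) :
  finite_alg A ->
  (semi_primal A <->
   forall (Y : Ob X) (phi1 phi2 : Hom X (Dob R A) Y),
     jointly_surj phi1 phi2 -> disj_union_images phi1 phi2 \/ phi1 = phi2).
Proof.
move=> finA; have HA : models (vSigma V) A := proj2_sig A.
split.
- move=> [_ sp] Y phi1 phi2 js.
  have [g [g1 g2]] := unit_iso R A.
  pose R0 (a b : A) := exists u, a = proj1_sig g (proj1_sig (Emor R phi1) u)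
                            /\ b = proj1_sig g (proj1_sig (Emor R phi2) u).
  have HR0 : subuniverse2 R0.
    move=> o args H.
    pose us i := proj1_sig (constructive_indefinite_description _ (H i)).
    have Hus : forall i, (args i).1 = proj1_sig g (proj1_sig (Emor R phi1) (us i))
                      /\ (args i).2 = proj1_sig g (proj1_sig (Emor R phi2) (us i)).
      move=> i; exact: (proj2_sig (constructive_indefinite_description _ (H i))).
    exists (aop us).
    rewrite !(proj2_sig (Emor R _)) !(proj2_sig g); split; congr aop;
      apply: functional_extensionality => i; by case: (Hus i).
  have tb : forall B : A -> Prop, subuniverse B -> B (ltop A) /\ B (lbot A).
    by move=> B sB; split; apply: (sub_teval sB) => -[].
  case: (sp R0 HR0) => [[B1 [B2 [s1 s2 HB]]] | [B [sB HB]]].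
    left.
    have [u [eu1 eu2]] : R0 (ltop A) (lbot A).
      by apply/HB; split; [exact: (tb _ s1).1 | exact: (tb _ s2).2].
    have [u' [eu1' eu2']] : R0 (lbot A) (ltop A).
      by apply/HB; split; [exact: (tb _ s1).2 | exact: (tb _ s2).1].
    have k1 : forall x, proj1_sig (cast (flatE R Y) u) (fmor phi1 x) = true.
      by move=> x; rewrite (link phi1 g2) -eu1 Htop.
    have k2 : forall x, proj1_sig (cast (flatE R Y) u) (fmor phi2 x) = false.
      by move=> x; rewrite (link phi2 g2) -eu2 Hbot.
    have k1' : forall x, proj1_sig (cast (flatE R Y) u') (fmor phi1 x) = false.
      by move=> x; rewrite (link phi1 g2) -eu1' Hbot.
    have k2' : forall x, proj1_sig (cast (flatE R Y) u') (fmor phi2 x) = true.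
      by move=> x; rewrite (link phi2 g2) -eu2' Htop.
    split => //.
      by move=> x x' e; move: (k1 x); rewrite e k2.
    move=> x x'; split => hle.
      case: (proj2_sig (cast (flatE R Y) u)) => mono _ _.
      by move: (mono _ _ hle (k1 x)); rewrite k2.
    case: (proj2_sig (cast (flatE R Y) u')) => mono _ _.
    by move: (mono _ _ hle (k2' x')); rewrite k1'.
  right; apply: (faithful (Dl := R)) => u.
  have : R0 (proj1_sig g (proj1_sig (Emor R phi1) u)) (proj1_sig g (proj1_sig (Emor R phi2) u)).
    by exists u.
  case/HB => e _.
  by rewrite -(g2 (proj1_sig (Emor R phi1) u)) e g2.
- move=> H2; split; first exact: majority HA.
  move=> Rl HR.
  pose RA : Aobj V := exist _ (subalg HR) (@subalg_models _ _ _ HR _ HA).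
  have finRA : finite_alg RA := subalg_finite HR finA.
  pose pi1 : ahom RA A := @exist _ (fun f : RA -> A => forall o (args : 'I_(ar o) -> RA), f (aop args) = aop (fun i => f (args i))) (fun r : RA => (proj1_sig r).1) (fun o args => erefl).
  pose pi2 : ahom RA A := @exist _ (fun f : RA -> A => forall o (args : 'I_(ar o) -> RA), f (aop args) = aop (fun i => f (args i))) (fun r : RA => (proj1_sig r).2) (fun o args => erefl).
  have js : jointly_surj (Dmor R pi1) (Dmor R pi2).
    move=> y; have [f [Hf|Hf]] := @ext _ _ HA finA _ HR (castD (flatD R RA) y).
      have [x hx] := castD_surj R f; exists x; left; apply: castD_inj; apply: Hcar_eq => r.
      by rewrite flatD_mor hx /= Hf.
    have [x hx] := castD_surj R f; exists x; right; apply: castD_inj; apply: Hcar_eq => r.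
    by rewrite flatD_mor hx /= Hf.
  case: (H2 _ _ _ js) => [[cov dsj inc] | Heq].
    left.
    have [r [r1 r2]] := sep_elem finRA finA cov dsj (fun x x' => (inc x x').1).
    have cov' : forall y, exists x, fmor (Dmor R pi2) x = y \/ fmor (Dmor R pi1) x = y.
      by move=> y; case: (cov y) => x h; exists x; case: h; [right|left].
    have [r' [r1' r2']] := sep_elem finRA finA cov'
       (fun x x' e => dsj x' x (esym e)) (fun x x' => (inc x' x).2).
    have Rtb : Rl (ltop A) (lbot A) by rewrite -r1 -r2; exact: (proj2_sig r).
    have Rbt : Rl (lbot A) (ltop A) by rewrite -r1' -r2'; exact: (proj2_sig r').
    exists (fun x => exists y, Rl x y), (fun y => exists x, Rl x y); split.
    + move=> o args H.
      exists (aop (fun i => proj1_sig (constructive_indefinite_description _ (H i)))).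
      exact: (HR o (fun i => (args i, proj1_sig (constructive_indefinite_description _ (H i))))
                (fun i => proj2_sig (constructive_indefinite_description _ (H i)))).
    + move=> o args H.
      exists (aop (fun i => proj1_sig (constructive_indefinite_description _ (H i)))).
      exact: (HR o (fun i => (proj1_sig (constructive_indefinite_description _ (H i)), args i))
                (fun i => proj2_sig (constructive_indefinite_description _ (H i)))).
    + move=> x y; split => [Hxy|[[y1 Rxy1] [x2 Rx2y]]]; first by split; [exists y|exists x].
      have Rm : forall a b c d, Rl a b -> Rl c d -> Rl (lmeet a c) (lmeet b d).
        by move=> a b c d h1 h2; exact: (R_top2 HR (vmeet V) h1 h2).
      have Rj : forall a b c d, Rl a b -> Rl c d -> Rl (ljoin a c) (ljoin b d).
        by move=> a b c d h1 h2; exact: (R_top2 HR (vjoin V) h1 h2).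
      have := Rj _ _ _ _ (Rm _ _ _ _ Rxy1 Rtb) (Rm _ _ _ _ Rx2y Rbt).
      by rewrite (meetx1 HA x) (meet0 HA y1) (meet0 HA x2) (meetx1 HA y) (joinx0 HA x) (join0 HA y).
  right; exists (fun x => Rl x x); split.
    by move=> o args H; exact: (HR o (fun i => (args i, args i)) H).
  move=> x y; split => [Rxy|[-> //]].
  have [g [g1 _]] := unit_iso R A.
  pose r : RA := exist _ (x, y) Rxy.
  have e1 := unit_nat R pi1 r; have e2 := unit_nat R pi2 r.
  rewrite Heq e2 in e1.
  have : y = x by have := f_equal (proj1_sig g) e1; rewrite !g1.
  by move=> eyx; subst y; split.
Qed.
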